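(* Let $A>0$, $\phi>0$, $0<\gamma<1$, and $\alpha,\beta>0$ with $\alpha+\beta<1$. For $k,N>0$ define $n^*(k,N)=\frac{1-\alpha}{4\phi kN^{\gamma}}$ and $e^*(k,N)=\frac{2\alpha}{1-\alpha}\phi k^{2}N^{\gamma}$, and the map $F_C(k,N)=\big(A\,e^*(k,N)^{\alpha}k^{\beta},\ n^*(k,N)N\big)$. Let $(\bar k,\bar N)$ be the unique fixed point of $F_C$ with $\bar k,\bar N>0$. Write $\bar e=e^*(\bar k,\bar N)$ and let $$E_k=\frac{\partial e^*}{\partial k}(\bar k,\bar N)=\frac{4\alpha\phi}{1-\alpha}\bar k\bar N^{\gamma},\quad E_N=\frac{\partial e^*}{\partial N}(\bar k,\bar N)=\frac{2\alpha\gamma\phi}{1-\alpha}\bar k^{2}\bar N^{\gamma-1},$$ $$D_k=\frac{\partial n^*}{\partial k}(\bar k,\bar N)=-\frac{1-\alpha}{4\phi\bar k^{2}\bar N^{\gamma}},\quad D_N=\frac{\partial n^*}{\partial N}(\bar k,\bar N)=-\frac{\gamma(1-\alpha)}{4\phi\bar k\bar N^{\gamma+1}}.$$ Suppose $$1-\frac{\alpha\bar e^{\alpha-1}E_N\bar k^{\beta}D_k\bar N}{\alpha\bar e^{\alpha-1}E_k\bar k^{\beta}+\frac{\beta}{A}}-\frac{1}{A\alpha\bar e^{\alpha-1}E_k\bar k^{\beta}+\beta}<-D_N\bar N<1-\frac{A\alpha\bar e^{\alpha-1}E_N\bar k^{\beta}D_k\bar N}{1+A\alpha\bar e^{\alpha-1}E_k\bar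 k^{\beta}+\beta}$$ and $$A\alpha\bar e^{\alpha-1}E_k\bar k^{\beta}+\beta>1.$$ Then $(\bar k,\bar N)$ is locally asymptotically stable, i.e. both eigenvalues of the Jacobian matrix of $F_C$ at $(\bar k,\bar N)$ have modulus strictly less than $1$.
   Context: Overlapping-generations model with human capital $k_t$ and adult population $N_t$, in the case where parental childcare times are perfect complements; $n^*$ and $e^*$ are the household's optimal fertility and education spending and the dynamics are $(k_{t+1},N_{t+1})=F_C(k_t,N_t)$. The fixed point is $\bar k=(A^{1/\alpha}\alpha/2)^{\alpha/(1-\beta-\alpha)}$, $\bar N=\left(\frac{1-\alpha}{4\phi\bar k}\right)^{1/\gamma}$. *)

(* Defs.v *)
From HB Require Import structures.
From mathcomp Require Import all_boot all_order all_algebra.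
From mathcomp Require Import all_classical all_reals all_analysis.
From mathcomp Require Import complex.
Set Implicit Arguments. Unset Strict Implicit. Unset Printing Implicit Defensive.
Import Order.TTheory GRing.Theory Num.Theory.
Local Open Scope ring_scope.

Section Model.
Variable R : realType.
Variables (A phi gamma alpha beta : R).

Definition nstar (k N : R) : R := (1 - alpha) / (4 * phi * k * N `^ gamma).
Definition estar (k N : R) : R :=
  (2 * alpha) / (1 - alpha) * phi * k ^+ 2 * N `^ gamma.

Definition FC1 (k N : R) : R := A * (estar k N) `^ alpha * k `^ beta.
Definition FC2 (k N : R) : R := nstar k N * N.

Definition pd_k (f : R -> R -> R) (k N : R) : R := derive1 (fun x => f x N) k.
Definition pd_N (f : R -> R -> R) (k N : R) : R := derive1 (fun y => f k y) N.

Definition jacFC (k N : R) : 'M[R]_2 :=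
  \matrix_(i < 2, j < 2)
    if i == ord0 then (if j == ord0 then pd_k FC1 k N else pd_N FC1 k N)
    else (if j == ord0 then pd_k FC2 k N else pd_N FC2 k N).

Definition Ek (kb Nb : R) : R := 4 * alpha * phi / (1 - alpha) * kb * Nb `^ gamma.
Definition EN (kb Nb : R) : R :=
  2 * alpha * gamma * phi / (1 - alpha) * kb ^+ 2 * Nb `^ (gamma - 1).
Definition Dk (kb Nb : R) : R := - ((1 - alpha) / (4 * phi * kb ^+ 2 * Nb `^ gamma)).
Definition DN (kb Nb : R) : R :=
  - (gamma * (1 - alpha) / (4 * phi * kb * Nb `^ (gamma + 1))).

End Model.

Definition eigen_in_unit_disk (R : realType) (n : nat) (J : 'M[R]_n) : Prop :=
  forall lam : R[i], eigenvalue (map_mx (fun x : R => (x%:C)%C) J) lam -> `|lam| < 1.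

(* Main.v *)
Require Import Defs.
From HB Require Import structures.
From mathcomp Require Import all_boot all_order all_algebra.
From mathcomp Require Import all_classical all_reals all_analysis.
From mathcomp Require Import complex.
From mathcomp Require Import ring lra.
Import Order.TTheory GRing.Theory Num.Theory.
Local Open Scope ring_scope.

Section Deriv.
Context {R : realType}.

Lemma dM {f g : R -> R} {x df dg : R} : is_derive x 1 f df -> is_derive x 1 g dg ->
  is_derive x 1 (fun y => f y * g y) (f x * dg + g x * df).
Proof. move=> hf hg; exact: (is_deriveM hf hg). Qed.

Lemma dC (c x : R) : is_derive x 1 (fun _ : R => c) 0.
Proof. exact: is_derive_cst. Qed.

Lemma dI (x : R) : is_derive x 1 (fun y : R => y) 1.
Proof. exact: is_derive_id. Qed.

Lemma dV {f : R -> R} {x df : R} : f x != 0 -> is_derive x 1 f df ->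
  is_derive x 1 (fun y => (f y)^-1) (- (f x) ^- 2 * df).
Proof. move=> h1 h2; exact: (is_deriveV h1 h2). Qed.

Lemma dP {f : R -> R} {x df : R} (a : R) : 0 < f x -> is_derive x 1 f df ->
  is_derive x 1 (fun y => f y `^ a) (a * f x `^ (a - 1) * df).
Proof.
move=> h1 h2.
have h3 : is_derive (f x) 1 (fun y : R => y `^ a) (a * f x `^ (a - 1)) by exact: is_derive1_powR.
exact: (is_derive1_comp h3 h2).
Qed.

Lemma dval {f : R -> R} {x df : R} : is_derive x 1 f df -> derive1 f x = df.
Proof. by move=> h; rewrite derive1E derive_val. Qed.

End Deriv.

Lemma powRm1 (R : realType) (x a : R) : 0 < x -> x `^ (a - 1) = x `^ a / x.
Proof. by move=> hx; rewrite powRB ?(gt_eqF hx) ?implybT // powRr1 // ltW. Qed.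
Lemma powRp1 (R : realType) (x a : R) : 0 < x -> x `^ (a + 1) = x `^ a * x.
Proof. by move=> hx; rewrite powRD ?(gt_eqF hx) ?implybT // powRr1 // ltW. Qed.

Lemma eig_quad (R : realType) (J : 'M[R]_2) (lam : R[i]) :
  eigenvalue (map_mx (fun x : R => (x%:C)%C) J) lam ->
  lam ^+ 2 - ((J 0 0 + J 1 1)%:C)%C * lam + ((J 0 0 * J 1 1 - J 0 1 * J 1 0)%:C)%C = 0.
Proof.
move=> /eigenvalueP [v Hv vnz].
move/matrixP: Hv => Hv. have e0 := Hv 0 0.
have e1 := Hv 0 1.
move: e0 e1; rewrite /= !mxE !big_ord_recl !big_ord0 !mxE /=.
have -> : lift ord0 ord0 = 1 :> 'I_2 by apply/val_inj.
have -> : ord0 = 0 :> 'I_2 by apply/val_inj.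
rewrite !addr0.
have vnz' : (v 0 0 != 0) || (v 0 1 != 0).
  apply: contraNT vnz; rewrite negb_or !negbK => /andP[/eqP h0 /eqP h1].
  apply/eqP/matrixP => i j; rewrite !mxE (ord1 i).
  case: j => [[|[|j]] Hj] //.
  - by rewrite (_ : Ordinal Hj = 0) //; apply/val_inj.
  - by rewrite (_ : Ordinal Hj = 1) //; apply/val_inj.
move: vnz'.
set v0 := v 0 0; set v1 := v 0 1.
rewrite !rmorphB !rmorphD !rmorphM /=.
set a := (J 0 0)%:C%C; set b := (J 0 1)%:C%C; set c := (J 1 0)%:C%C; set d := (J 1 1)%:C%C.
move=> vnz' e0 e1.
have h0 : v0 * (lam ^+ 2 - (a + d) * lam + (a * d - b * c)) =
  (d - lam) * (v0 * a + v1 * c - lam * v0) - c * (v0 * b + v1 * d - lam * v1) by ring.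
have h1 : v1 * (lam ^+ 2 - (a + d) * lam + (a * d - b * c)) =
  (a - lam) * (v0 * b + v1 * d - lam * v1) - b * (v0 * a + v1 * c - lam * v0) by ring.
rewrite e0 e1 !subrr !mulr0 subrr in h0 h1.
case/orP: vnz' => nz.
- by move/eqP: h0; rewrite mulf_eq0 (negbTE nz) /= => /eqP.
- by move/eqP: h1; rewrite mulf_eq0 (negbTE nz) /= => /eqP.
Qed.

Lemma quad_disk (R : realType) (T D : R) (lam : R[i]) :
  D < 1 -> 0 < 1 - T + D -> 0 < 1 + T + D ->
  lam ^+ 2 - (T%:C)%C * lam + (D%:C)%C = 0 -> `|lam| < 1.
Proof.
move=> hD h1 h2; case: lam => x y.
rewrite expr2; simpc => /eqP; rewrite eq_complex /= => /andP[/eqP eR /eqP eI].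
rewrite -sqrtr1 ltr_sqrt ?ltr01 //.
have [y0|y0] := eqVneq y 0.
  subst y.
  have {}eR : x * x - T * x + D = 0 by move: eR; rewrite mulr0 subr0.
  rewrite expr0n /= addr0.
  have hx1 : x < 1.
    rewrite ltNge; apply/negP => hx.
    have : x * (1 - T + D) = - ((x - 1) * (x - D)).
      by rewrite -[RHS]addr0 -eR; ring.
    have : 0 < x * (1 - T + D) by apply: mulr_gt0 => //; lra.
    have : 0 <= (x - 1) * (x - D) by apply: mulr_ge0; lra.
    lra.
  have hx2 : -1 < x.
    rewrite ltNge; apply/negP => hx.
    have : x * (1 + T + D) = (x + 1) * (x + D).
      by rewrite -[RHS]subr0 -eR; ring.
    have : x * (1 + T + D) < 0 by rewrite pmulr_llt0 //; lra.
    have : 0 <= (x + 1) * (x + D) by apply: mulr_le0; lra.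
    lra.
  have : 0 < (1 - x) * (1 + x) by apply: mulr_gt0; lra.
  rewrite expr2. nra.
have hx : 2 * x - T = 0.
  apply/eqP; move/eqP: eI; apply: contraLR => hn.
  rewrite (_ : _ - _ = y * (2 * x - T)); last by ring.
  by rewrite mulf_eq0 negb_or y0.
have : x ^+ 2 + y ^+ 2 = x * (2 * x - T) + D - (x * x - y * y - T * x + D) by ring.
by rewrite hx eR mulr0 add0r subr0 => ->.
Qed.

Theorem proposition4 (R : realType) (A phi gamma alpha beta kb Nb : R) :
  0 < A -> 0 < phi -> 0 < gamma -> gamma < 1 -> 0 < alpha -> 0 < beta ->
  alpha + beta < 1 ->
  0 < kb -> 0 < Nb ->
  FC1 A phi gamma alpha beta kb Nb = kb ->
  FC2 phi gamma alpha kb Nb = Nb ->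
  let eb := estar phi gamma alpha kb Nb in
  let ek := Ek phi gamma alpha kb Nb in
  let eN := EN phi gamma alpha kb Nb in
  let dk := Dk phi gamma alpha kb Nb in
  let dN := DN phi gamma alpha kb Nb in
  let X := alpha * eb `^ (alpha - 1) * ek * kb `^ beta in
  1 - (alpha * eb `^ (alpha - 1) * eN * kb `^ beta * dk * Nb) / (X + beta / A)
    - 1 / (A * X + beta) < - dN * Nb ->
  - dN * Nb < 1 - (A * alpha * eb `^ (alpha - 1) * eN * kb `^ beta * dk * Nb)
                    / (1 + A * X + beta) ->
  A * X + beta > 1 ->
  eigen_in_unit_disk (jacFC A phi gamma alpha beta kb Nb).
Proof.
move=> hA hphi hg0 hg1 ha hb hab hk hN H1 H2 eb ek eN dk dN X hL _ hX.
have hM : 0 < Nb `^ gamma by exact: powR_gt0.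
have ha1 : 0 < 1 - alpha by lra.
have he : 0 < estar phi gamma alpha kb Nb.
  rewrite /estar; apply: mulr_gt0 => //; apply: mulr_gt0; last exact: exprn_gt0.
  apply: mulr_gt0 => //; apply: divr_gt0 => //; lra.
have hEk := dM (dM (dC (2 * alpha / (1 - alpha) * phi) kb) (dM (dI kb) (dI kb))) (dC (Nb `^ gamma) kb).
have J00 := dval (dM (dM (dC A kb) (@dP _ (fun y => estar phi gamma alpha y Nb) kb _ alpha he hEk)) (dP beta hk (dI kb))).
rewrite -/(pd_k (FC1 A phi gamma alpha beta) kb Nb) in J00.
have hEN := dM (dC (2 * alpha / (1 - alpha) * phi * kb ^+ 2) Nb) (dP gamma hN (dI Nb)).
have J01 := dval (dM (dM (dC A Nb) (@dP _ (fun y => estar phi gamma alpha kb y) Nb _ alpha he hEN)) (dC (kb `^ beta) Nb)).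
rewrite -/(pd_N (FC1 A phi gamma alpha beta) kb Nb) in J01.
have nz1 : 4 * phi * kb * Nb `^ gamma != 0.
  by rewrite gt_eqF // !mulr_gt0.
have J10 := dval (dM (dM (dC (1 - alpha) kb) (@dV _ (fun y => 4 * phi * y * Nb `^ gamma) kb _ nz1
   (dM (dM (dC (4 * phi) kb) (dI kb)) (dC (Nb `^ gamma) kb)))) (dC Nb kb)).
rewrite -/(pd_k (FC2 phi gamma alpha) kb Nb) in J10.
have J11 := dval (dM (dM (dC (1 - alpha) Nb) (@dV _ (fun y => 4 * phi * kb * y `^ gamma) Nb _ nz1
   (dM (dC (4 * phi * kb) Nb) (dP gamma hN (dI Nb))))) (dI Nb)).
rewrite -/(pd_N (FC2 phi gamma alpha) kb Nb) in J11.
rewrite /X /eb /ek /eN /dk /dN /Ek /EN /Dk /DN in hL hX.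
rewrite /FC1 in H1; rewrite /FC2 /nstar in H2.
rewrite ?powRm1 // in J00 J01 J11 hL hX.
rewrite ?powRp1 // in hL.
have h2 : 1 - alpha = 4 * phi * kb * Nb `^ gamma.
  have nN : Nb != 0 by rewrite gt_eqF.
  have : (1 - alpha) / (4 * phi * kb * Nb `^ gamma) = 1.
    by apply: (mulIf nN); rewrite mul1r.
  by move=> h; rewrite -[LHS](divfK nz1) h mul1r.
have eE : estar phi gamma alpha kb Nb = alpha * kb / 2.
  rewrite /estar h2; field.
  by rewrite !gt_eqF.
rewrite eE in J00 J01 hL hX H1.
have hq : 0 < (alpha * kb / 2) `^ alpha by apply: powR_gt0; rewrite -eE.
have hp : 0 < kb `^ beta by apply: powR_gt0.
move: hq hp hM J00 J01 J10 J11 hL hX H1 h2 nz1.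
set q := (alpha * kb / 2) `^ alpha; set p := kb `^ beta; set M := Nb `^ gamma.
clearbody q p M.
move=> hq hp hM J00 J01 J10 J11 hL hX H1 h2 nz1.
have phiE : phi = (1 - alpha) / (4 * kb * M).
  by rewrite h2; field; rewrite !gt_eqF.
have qE : q = kb / (A * p) by rewrite -H1; field; rewrite !gt_eqF.
clear h2 H1 nz1 he eE hEk hEN; subst phi q.
have j00 : pd_k (FC1 A ((1 - alpha) / (4 * kb * M)) gamma alpha beta) kb Nb = 2 * alpha + beta.
  by rewrite J00; field; rewrite !gt_eqF.
have j01 : pd_N (FC1 A ((1 - alpha) / (4 * kb * M)) gamma alpha beta) kb Nb = alpha * gamma * kb / Nb.
  by rewrite J01; field; rewrite !gt_eqF.
have j10 : pd_k (FC2 ((1 - alpha) / (4 * kb * M)) gamma alpha) kb Nb = - (Nb / kb).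
  by rewrite J10; field; rewrite !gt_eqF.
have j11 : pd_N (FC2 ((1 - alpha) / (4 * kb * M)) gamma alpha) kb Nb = 1 - gamma.
  by rewrite J11; field; rewrite !gt_eqF.
have hX' : 1 < 2 * alpha + beta.
  move: hX; rewrite (_ : A * _ + beta = 2 * alpha + beta) //.
  by field; rewrite !gt_eqF.
have hab0 : 0 < 2 * alpha + beta by lra.
have hL' : 1 + alpha * gamma / (2 * alpha + beta) - 1 / (2 * alpha + beta) < gamma.
  move: hL; rewrite (_ : - - _ * Nb = gamma); last by field; rewrite !gt_eqF.
  rewrite (_ : 1 - _ / _ - 1 / _ = 1 + alpha * gamma / (2 * alpha + beta) - 1 / (2 * alpha + beta)) //.
  by field; rewrite !gt_eqF.
have key : 2 * alpha + beta + alpha * gamma - 1 < gamma * (2 * alpha + beta).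
  move: hL'; rewrite (_ : 1 + _ - _ = (2 * alpha + beta + alpha * gamma - 1) / (2 * alpha + beta)).
    by rewrite ltr_pdivrMr.
  by field; rewrite gt_eqF.
have hbc : alpha * gamma * kb / Nb * - (Nb / kb) = - (alpha * gamma) by field; rewrite !gt_eqF.
move=> lam /eig_quad /quad_disk; apply; rewrite !mxE /= j00 j01 j10 j11 hbc.
- nra.
- have : 0 < gamma * (1 - alpha - beta) by apply: mulr_gt0; lra.
  nra.
- have : 0 < (2 * alpha + beta) * (1 - gamma) by apply: mulr_gt0; lra.
  have : 0 < alpha * gamma by apply: mulr_gt0.
  nra.
Qed.
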